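(* There is an absolute constant $c>0$ such that the following holds. Let $(X,d)$ be a finite metric space with terminals $t_1,\dots,t_k$, $k\ge2$, let $\Delta>0$, and let $\Pi$ be the random partial partition produced by the truncated-exponential ball-carving procedure with parameters $\lambda=\Delta/\ln k$ and $\Delta$. If $P$ is a shortest path in $X$ with $d(P)<\lambda$, then for every $t\ge1$, $\Pr[Z_P>t]\le 2e^{-ct}$.
   Context: Truncated exponential $\mathrm{Texp}(\lambda,\Delta)$: the distribution on $[0,\Delta)$ with density $g(x)=\frac{1}{\lambda(1-e^{-\Delta/\lambda})}e^{-x/\lambda}$. $B(x,r)=\{y\in X:d(x,y)\le r\}$. Ball-carving procedure: for $j=1,\dots,k$ choose independently $R_j\sim\mathrm{Texp}(\lambda,\Delta)$, let $B_j=B(t_j,R_j)$ and $S_j=B_j\setminus\bigcup_{m<j}B_m$; output $\Pi=\{S_1,\dots,S_k\}\setminus\{\emptyset\}$. A shortest path is a sequence $P=(x_0,\dots,x_\ell)$ of points with $\sum_i d(x_{i-1},x_i)=d(x_0,x_\ell)$, of length $d(P)=d(x_0,x_\ell)$. $Z_P$ is the number of clusters $S\in\Pi$ with $S\cap P\neq\emptyset$. *)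

(* Defs.v *)
From Stdlib Require Import Reals.
From mathcomp Require Import all_boot.

Set Implicit Arguments.
Unset Strict Implicit.
Unset Printing Implicit Defensive.

Local Open Scope R_scope.

Definition is_metric (X : finType) (d : X -> X -> R) : Prop :=
  (forall x y, 0 <= d x y) /\
  (forall x y, d x y = 0 <-> x = y) /\
  (forall x y, d x y = d y x) /\
  (forall x y z, d x z <= d x y + d y z).

Definition texp_density (lam Delta x : R) : R :=
  / (lam * (1 - exp (- Delta / lam))) * exp (- x / lam).

Definition ball (X : finType) (d : X -> X -> R) (c : X) (r : R) : {set X} :=
  [set y | if Rle_dec (d c y) r then true else false].

Definition cluster (X : finType) (d : X -> X -> R) (k : nat)
  (term : 'I_k -> X) (rs : seq R) (j : 'I_k) : {set X} :=
  ball d (term j) (nth 0 rs j)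
    :\: \bigcup_(m : 'I_k | (nat_of_ord m < nat_of_ord j)%N) ball d (term m) (nth 0 rs m).

Definition carved_partition (X : finType) (d : X -> X -> R) (k : nat)
  (term : 'I_k -> X) (rs : seq R) : {set {set X}} :=
  [set cluster d term rs j | j : 'I_k] :\ set0.

Definition Z_P (X : finType) (d : X -> X -> R) (k : nat)
  (term : 'I_k -> X) (rs : seq R) (P : seq X) : nat :=
  #|[set S in carved_partition d term rs | S :&: [set x in P] != set0]|.

Fixpoint path_length (X : finType) (d : X -> X -> R) (x0 : X) (xs : seq X) : R :=
  match xs with
  | [::] => 0
  | y :: ys => d x0 y + path_length d y ys
  end.

Definition is_shortest_path (X : finType) (d : X -> X -> R) (x0 : X) (xs : seq X) : Prop :=
  path_length d x0 xs = d x0 (last x0 xs).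

Definition is_integral (f : R -> R) (a b v : R) : Prop :=
  exists pr : Riemann_integrable f a b, RiemannInt pr = v.

(* iid_expect lam Delta n F v : v = E[F(R_1,...,R_n)] for R_i iid Texp(lam,Delta),
   written as an iterated integral against the density. *)
Fixpoint iid_expect (lam Delta : R) (n : nat) (F : seq R -> R) (v : R) : Prop :=
  match n with
  | O => v = F [::]
  | S n' => exists h : R -> R,
      (forall x, 0 <= x < Delta -> iid_expect lam Delta n' (fun rs => F (x :: rs)) (h x)) /\
      is_integral (fun x => texp_density lam Delta x * h x) 0 Delta v
  end.

Definition prob_event (lam Delta : R) (n : nat) (E : seq R -> bool) (v : R) : Prop :=
  iid_expect lam Delta n (fun rs => if E rs then 1 else 0) v.

Definition Z_P_gt (X : finType) (d : X -> X -> R) (k : nat)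
  (term : 'I_k -> X) (P : seq X) (t : R) (rs : seq R) : bool :=
  if Rlt_dec t (INR (Z_P d term rs P)) then true else false.

(* Main.v *)
Require Import Defs.
From Stdlib Require Import Reals Lra Psatz FunctionalExtensionality ClassicalEpsilon.
From mathcomp Require Import all_boot.
From Coquelicot Require Import Coquelicot.
Local Open Scope R_scope.

Section An.
Variables lam Delta : R.
Hypothesis Hlam : 0 < lam.
Hypothesis HD : 0 < Delta.

Definition E0 := exp (- Delta / lam).
Lemma E0_lt1 : E0 < 1.
Proof.
unfold E0. rewrite <- exp_0. apply exp_increasing.
assert (0 < Delta / lam) by (apply Rdiv_lt_0_compat; lra).
unfold Rdiv in *. lra.
Qed.
Lemma E0_pos : 0 < E0. Proof. apply exp_pos. Qed.

Definition dens x := texp_density lam Delta x.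

Lemma dens_pos x : 0 < dens x.
Proof.
unfold dens, texp_density. fold E0. have := E0_lt1.
move=> H. apply Rmult_lt_0_compat. apply Rinv_0_lt_compat.
apply Rmult_lt_0_compat; lra. apply exp_pos.
Qed.

Lemma dens_cont x : continuous dens x.
Proof.
apply: (@ex_derive_continuous R_AbsRing R_NormedModule). unfold dens, texp_density. auto_derive. auto.
Qed.

Lemma int_dens u v : is_RInt dens u v ((exp (- u / lam) - exp (- v / lam)) / (1 - E0)).
Proof.
have H1 := E0_lt1.
have -> : (exp (- u / lam) - exp (- v / lam)) / (1 - E0) =
  minus ((fun x => - exp (- x / lam) / (1 - E0)) v) ((fun x => - exp (- x / lam) / (1 - E0)) u).
{ rewrite /minus /plus /opp /=. field. lra. }
apply: (@is_RInt_derive R_CompleteNormedModule (fun x => - exp (- x / lam) / (1 - E0))).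
- move=> x _. unfold dens, texp_density. fold E0. auto_derive. auto.
  unfold Rdiv. field. split; lra.
- move=> x _. apply dens_cont.
Qed.


Definition ind (u x : R) : R := if Rle_dec u x then 1 else 0.
Definition Pge (u : R) : R := Rmax 0 ((exp (- u / lam) - E0) / (1 - E0)).

Lemma is_RInt_zero a b : a <= b -> is_RInt (fun _ => 0) a b 0.
Proof.
move=> _. have := @is_RInt_const R_NormedModule a b 0.
by rewrite scal_zero_r.
Qed.

Lemma Pge_ge0 u : 0 <= Pge u.
Proof. apply Rmax_l. Qed.

Lemma int_ind u : 0 <= u -> is_RInt (fun x => dens x * ind u x) 0 Delta (Pge u).
Proof.
move=> Hu. have H1 := E0_lt1.
destruct (Rlt_dec u Delta) as [Hlt|Hge].
- have -> : Pge u = plus 0 ((exp (- u / lam) - exp (- Delta / lam)) / (1 - E0)).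
  { rewrite /Pge /plus /=. rewrite Rplus_0_l. fold E0. apply Rmax_right.
    apply Rmult_le_pos; last by (left; apply Rinv_0_lt_compat; lra).
    have : exp (- Delta / lam) <= exp (- u / lam).
    { apply exp_le_3 || idtac. left. apply exp_increasing.
      unfold Rdiv. apply Rmult_lt_compat_r. by apply Rinv_0_lt_compat. lra. }
    rewrite /E0. lra. }
  apply: (is_RInt_Chasles _ 0 u Delta).
  + apply: (is_RInt_ext (fun _ => 0)); last by apply is_RInt_zero.
    move=> x. rewrite Rmin_left // Rmax_right // => Hx.
    rewrite /ind. destruct (Rle_dec u x); first lra. simpl; ring.
  + apply: (is_RInt_ext dens); last by apply int_dens.
    move=> x. rewrite Rmin_left ?Rmax_right; try lra. move=> Hx.
    rewrite /ind. destruct (Rle_dec u x); last lra. simpl; ring.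
- have -> : Pge u = 0.
  { rewrite /Pge. apply Rmax_left.
    have : exp (- u / lam) <= exp (- Delta / lam).
    { destruct (Req_dec u Delta) as [->|Hne]; first lra.
      left. apply exp_increasing.
      unfold Rdiv. apply Rmult_lt_compat_r. by apply Rinv_0_lt_compat. lra. }
    move=> H. fold E0 in H. unfold Rdiv. apply Rmult_le_0_r. lra.
    left; apply Rinv_0_lt_compat; lra. }
  apply: (is_RInt_ext (fun _ => 0)); last by apply is_RInt_zero; lra.
  move=> x. rewrite Rmin_left ?Rmax_right; try lra. move=> Hx.
  rewrite /ind. destruct (Rle_dec u x); first lra. simpl; ring.
Qed.


Lemma ex_pw (T : list R) : forall a b (h : R -> R), a <= b ->
  (forall x y, a < x < b -> a < y < b ->
     (forall tau, List.In tau T -> (tau <= x <-> tau <= y)) -> h x = h y) ->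
  ex_RInt (fun x => dens x * h x) a b.
Proof.
elim: T => [|tau T IH] a b h Hab Hh.
- destruct (Req_dec a b) as [<-|Hne]; first by apply ex_RInt_point.
  apply: (ex_RInt_ext (fun x => dens x * h ((a + b) / 2))).
  + move=> x. rewrite Rmin_left ?Rmax_right; try lra. move=> Hx.
    f_equal. apply Hh; try lra. by [].
  + apply: ex_RInt_continuous => z _.
    apply: (@ex_derive_continuous R_AbsRing R_NormedModule).
    unfold dens, texp_density. auto_derive. auto.
- destruct (Rlt_dec a tau) as [H1|H1]; first destruct (Rlt_dec tau b) as [H2|H2].
  + apply: (ex_RInt_Chasles _ a tau b).
    * apply IH; first lra. move=> x y Hx Hy HT. apply Hh; try lra.
      move=> s [<-|Hs]; [lra| by apply HT].
    * apply IH; first lra. move=> x y Hx Hy HT. apply Hh; try lra.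
      move=> s [<-|Hs]; [lra| by apply HT].
  + apply IH => // x y Hx Hy HT. apply Hh => //.
    move=> s [<-|Hs]; [lra| by apply HT].
  + apply IH => // x y Hx Hy HT. apply Hh => //.
    move=> s [<-|Hs]; [lra| by apply HT].
Qed.


Lemma RInt_correctR (f : R -> R) a b : ex_RInt f a b -> is_RInt f a b (RInt f a b).
Proof. exact: (@RInt_correct R_CompleteNormedModule f a b). Qed.
Lemma is_RInt_uniqueR (f : R -> R) a b l : is_RInt f a b l -> RInt f a b = l.
Proof. exact: (@is_RInt_unique R_CompleteNormedModule f a b l). Qed.

Lemma is_integral_RInt f a b v : is_integral f a b v -> is_RInt f a b v.
Proof.
move=> [pr <-]. rewrite -RInt_Reals. apply RInt_correctR. by apply ex_RInt_Reals_1.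
Qed.

Lemma RInt_is_integral f a b v : is_RInt f a b v -> is_integral f a b v.
Proof.
move=> H. have Hex : ex_RInt f a b by exists v.
exists (ex_RInt_Reals_0 _ _ _ Hex). rewrite -RInt_Reals. by apply is_RInt_uniqueR.
Qed.

Lemma iid_ext n F G v : (forall rs, F rs = G rs) -> iid_expect lam Delta n F v -> iid_expect lam Delta n G v.
Proof.
move=> H. have -> // : G = F. apply functional_extensionality => rs. by rewrite H.
Qed.

Lemma iid_mono n : forall F G v w, iid_expect lam Delta n F v -> iid_expect lam Delta n G w ->
  (forall rs, F rs <= G rs) -> v <= w.
Proof.
elim: n => [|n IH] F G v w /=.
- move=> -> -> H; apply H.
- move=> [hF [HF1 HF2]] [hG [HG1 HG2]] H.
  have K1 := is_integral_RInt _ _ _ _ HF2. have K2 := is_integral_RInt _ _ _ _ HG2. apply: (is_RInt_le _ _ 0 Delta _ _ _ K1 K2); first lra.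
  move=> x Hx. apply Rmult_le_compat_l; first by left; apply (dens_pos x).
    apply: (IH _ _ _ _ (HF1 x _) (HG1 x _)); try lra. move=> rs; apply H.
Qed.

Lemma iid_uniq n F v w : iid_expect lam Delta n F v -> iid_expect lam Delta n F w -> v = w.
Proof.
move=> H1 H2. apply Rle_antisym; [apply: (@iid_mono n F F v w H1 H2) | apply: (@iid_mono n F F w v H2 H1)]; move=> rs; lra.
Qed.

Lemma int_dens1 : is_RInt dens 0 Delta 1.
Proof.
have := int_dens 0 Delta. have H1 := E0_lt1.
have -> // : (exp (- 0 / lam) - exp (- Delta / lam)) / (1 - E0) = 1.
have -> : exp (- 0 / lam) = 1 by rewrite /Rdiv Ropp_0 Rmult_0_l exp_0. fold E0. field. lra.
Qed.

Lemma iid_const n c : iid_expect lam Delta n (fun _ => c) c.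
Proof.
elim: n => [|n IH] /=; first by [].
exists (fun _ => c). split; first by move=> x _.
apply RInt_is_integral.
have := is_RInt_scal _ _ _ c _ int_dens1.
rewrite /scal /= /mult /= Rmult_1_r => H.
apply: (is_RInt_ext _ _ _ _ _ _ H) => x _. by rewrite Rmult_comm.
Qed.

Definition nice (T : list R) (F : seq R -> R) :=
  forall rs rs', (forall i tau, List.In tau T -> (tau <= nth 0 rs i <-> tau <= nth 0 rs' i)) -> F rs = F rs'.

Lemma iid_exists T n : forall F, nice T F -> exists v, iid_expect lam Delta n F v.
Proof.
elim: n => [|n IH] F HF /=; first by exists (F [::]).
have Hx : forall x, nice T (fun rs => F (x :: rs)).
{ move=> x rs rs' H. apply HF => [[|i]] tau Ht /=; [lra| by apply H]. }
pose h x := proj1_sig (constructive_indefinite_description _ (IH _ (Hx x))).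
have Hh : forall x, iid_expect lam Delta n (fun rs => F (x :: rs)) (h x).
{ move=> x. rewrite /h. by case: constructive_indefinite_description. }
have Hex : ex_RInt (fun x => dens x * h x) 0 Delta.
{ apply: (ex_pw T); first lra.
  move=> x y _ _ HT. apply: (@iid_uniq n _ _ _ (Hh x)).
  apply: (@iid_ext n _ _ _ _ (Hh y)) => rs. apply HF => [[|i]] tau Ht /=.
  - have := HT tau Ht. tauto.
  - tauto. }
exists (RInt (fun x => dens x * h x) 0 Delta), h. split; first by move=> x _.
apply RInt_is_integral. by apply RInt_correctR.
Qed.


Definition th := exp (1/10).
Lemma th_gt1 : 1 < th.
Proof. rewrite /th. have := exp_ineq1 (1/10). lra. Qed.
Lemma th_le : th <= 10/9.
Proof.
rewrite /th. have H := exp_ineq1_le (- (1/10)). rewrite exp_Ropp in H.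
have Hp := exp_pos (1/10).
apply (Rmult_le_reg_r (/ exp (1/10))). by apply Rinv_0_lt_compat.
rewrite Rinv_r; last lra. nra.
Qed.

Definition alpha := 2/3 * (E0 / (1 - E0)).
Definition Vb (n : nat) := 2 * (1 + alpha) ^ n.
Lemma alpha_ge0 : 0 <= alpha.
Proof. have := E0_lt1; have := E0_pos => ??. rewrite /alpha.
apply Rmult_le_pos; first lra. apply Rmult_le_pos; first lra. left; apply Rinv_0_lt_compat; lra. Qed.
Lemma Vb_ge2 n : 2 <= Vb n.
Proof. rewrite /Vb. have := pow_R1_Rle (1 + alpha) n. have := alpha_ge0. move=> ? H. have := H ltac:(lra). lra. Qed.

Variable X : finType.
Variable d : X -> X -> R.
Hypothesis Hm : is_metric d.
Variable Pset : {set X}.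
Variable L : R.
Hypothesis HL : L < lam.
Hypothesis Hdiam : forall y z, y \in Pset -> z \in Pset -> d y z <= L.

Fixpoint cntF (U : {set X}) (tf : nat -> X) (n : nat) (rs : seq R) : nat :=
  match n with
  | O => 0%N
  | S n' => ((U :&: Defs.ball d (tf 0%N) (nth R0 rs 0) != set0) +
             cntF (U :\: Defs.ball d (tf 0%N) (nth R0 rs 0)) (fun i => tf i.+1) n' (behead rs))%N
  end.

Lemma cntF0 tf n rs : cntF set0 tf n rs = 0%N.
Proof. elim: n tf rs => [|n IH] tf rs //=. by rewrite set0I eqxx set0D IH. Qed.

Lemma exists_min (U : {set X}) (f : X -> R) : U != set0 -> exists y, y \in U /\ forall z, z \in U -> f y <= f z.
Proof.
move=> HU.
have : forall s : seq X, s <> [::] -> exists y, y \in s /\ forall z, z \in s -> f y <= f z.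
{ elim => [|a s IH] // _. case: s IH => [|b s] IH.
  - exists a; split; first by rewrite mem_seq1. move=> z; rewrite mem_seq1 => /eqP ->; lra.
  - have [y [Hy Hmin]] := IH ltac:(discriminate).
    destruct (Rle_dec (f a) (f y)) as [Hle|Hlt].
    + exists a; split; first by rewrite mem_head. move=> z; rewrite in_cons => /orP [/eqP ->|Hz]; first lra.
      have := Hmin z Hz; lra.
    + exists y; split; first by rewrite in_cons Hy orbT. move=> z; rewrite in_cons => /orP [/eqP ->|Hz]; first lra.
      by apply Hmin. }
move=> /(_ (enum U)) [].
- case: (set_0Vmem U) HU => [->|[x Hx]]; first by rewrite eqxx.
  move=> _ He. have : x \in enum U by rewrite mem_enum. by rewrite He.
- move=> y [Hy Hmin]. exists y; split; first by rewrite -mem_enum.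
  move=> z Hz; apply Hmin; by rewrite mem_enum.
Qed.


Hypothesis HL0 : 0 <= L.

Lemma in_ball c r y : (y \in Defs.ball d c r) <-> d c y <= r.
Proof. rewrite /Defs.ball inE. destruct (Rle_dec (d c y) r); split => //. Qed.
Arguments in_ball {c r y}.

Lemma int_g D a V' : 0 <= D ->
  is_RInt (fun x => dens x * (exp (1/10 * a) * (V' + (th - 1) * V' * ind D x + th * (1 - V') * ind (D + L) x)))
    0 Delta (exp (1/10 * a) * (V' + (th - 1) * V' * Pge D + th * (1 - V') * Pge (D + L))).
Proof.
move=> HD0.
have I1 := is_RInt_scal _ _ _ (exp (1/10 * a) * V') _ int_dens1.
have I2 := is_RInt_scal _ _ _ (exp (1/10 * a) * ((th - 1) * V')) _ (int_ind D HD0).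
have I3 := is_RInt_scal _ _ _ (exp (1/10 * a) * (th * (1 - V'))) _ (int_ind (D + L) ltac:(lra)).
have I := is_RInt_plus _ _ _ _ _ _ (is_RInt_plus _ _ _ _ _ _ I1 I2) I3.
have -> : exp (1/10 * a) * (V' + (th - 1) * V' * Pge D + th * (1 - V') * Pge (D + L)) =
  plus (plus (scal (exp (1/10 * a) * V') 1) (scal (exp (1/10 * a) * ((th - 1) * V')) (Pge D)))
       (scal (exp (1/10 * a) * (th * (1 - V'))) (Pge (D + L))).
{ rewrite /plus /scal /= /mult /=. ring. }
apply: (is_RInt_ext _ _ _ _ _ _ I) => x _. rewrite /plus /scal /= /mult /=. ring.
Qed.

Lemma exp_hit a (b : bool) : exp (1/10 * (a + INR b)) <= exp (1/10 * a) * th.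
Proof.
rewrite /th -exp_plus. case: b => /=.
- right. f_equal. ring.
- rewrite Rplus_0_r. left. apply exp_increasing. lra.
Qed.

Lemma bound_main n : forall (tf : nat -> X) (U : {set X}) (a : R) (F : seq R -> R) (v : R), U \subset Pset ->
  (forall rs, F rs = exp (1/10 * (a + INR (cntF U tf n rs)))) ->
  iid_expect lam Delta n F v -> v <= exp (1/10 * a) * Vb n.
Proof.
elim: n => [|n IH] tf U a F v HU HF.
- rewrite /= => ->. rewrite HF /= Rplus_0_r /Vb /=.
  have := exp_pos (1/10 * a). lra.
- have HVb : Vb n.+1 = (1 + alpha) * Vb n by rewrite /Vb /=; ring.
  have HV2 := Vb_ge2 n. have Ha := alpha_ge0. have Hea := exp_pos (1/10 * a).
  have Hth1 := th_gt1. have Hth2 := th_le. have HE1 := E0_lt1. have HE0 := E0_pos.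
  case: (eqVneq U set0) => [U0|Hne].
  { subst U. move=> Hv.
    have Hc : iid_expect lam Delta n.+1 F (exp (1/10 * a)).
    { apply: (@iid_ext n.+1 (fun _ => exp (1/10 * a))); last by apply iid_const.
      move=> rs. by rewrite HF cntF0 /= Rplus_0_r. }
    rewrite (@iid_uniq n.+1 _ _ _ Hv Hc) HVb. have H1 : 1 <= (1 + alpha) * Vb n by nra. nra. }
  have [y0 [Hy0 Hmin]] := @exists_min U (d (tf 0%N)) Hne.
  set D := d (tf 0%N) y0.
  have HD0 : 0 <= D by apply Hm.
  move=> /= [h [Hh1 Hh2]].
  have Hgg := int_g D a (Vb n) HD0.
  have Hle := is_RInt_le _ _ 0 Delta _ _ ltac:(lra) (is_integral_RInt _ _ _ _ Hh2) Hgg.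
  apply: Rle_trans; first apply: Hle.
  + move=> x Hx. apply Rmult_le_compat_l; first by left; apply (dens_pos x).
    set B := Defs.ball d (tf 0%N) x.
    have HUp : U :\: B \subset Pset by apply: subset_trans HU; apply: subsetDl.
    have HFx : forall rs, F (x :: rs) = exp (1/10 * ((a + INR (U :&: B != set0)) + INR (cntF (U :\: B) (fun i => tf i.+1) n rs))).
    { move=> rs. rewrite HF /=. rewrite -/B. rewrite (plus_INR (nat_of_bool _)). f_equal. ring. }
    have IHx := IH _ _ _ _ _ HUp HFx (Hh1 x ltac:(lra)).
    destruct (Rlt_dec x D) as [Hlt|Hge].
    * have Hhit : (U :&: B != set0) = false.
      { apply/negbTE/negPn/eqP. apply/setP => y. rewrite in_setI in_set0.
        apply/negbTE/negP => /andP [Hy HyB]. have := proj1 (@in_ball _ _ _) HyB. move=> {}HyB.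
        have := Hmin y Hy. rewrite -/D. lra. }
      move: IHx. rewrite Hhit /ind. destruct (Rle_dec D x); first lra.
      destruct (Rle_dec (D + L) x); first lra. rewrite /= Rplus_0_r. lra.
    * destruct (Rlt_dec x (D + L)) as [Hlt2|Hge2].
      -- have := exp_hit a (U :&: B != set0). rewrite /ind.
         destruct (Rle_dec D x); last lra. destruct (Rle_dec (D + L) x); first lra.
         move=> Hh. apply: Rle_trans IHx _. simpl. nra.
      -- have HUB : U \subset B.
         { apply/subsetP => y Hy. apply/in_ball.
           have := proj2 (proj2 (proj2 Hm)) (tf 0%N) y0 y. have := Hdiam _ _ (subsetP HU _ Hy0) (subsetP HU _ Hy).
           rewrite -/D. lra. }
         have Hc : iid_expect lam Delta n (fun rs => F (x :: rs)) (exp (1/10 * a) * th).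
         { apply: (@iid_ext n (fun _ => exp (1/10 * a) * th)); last by apply iid_const.
           move=> rs. rewrite HFx.
           have -> : U :\: B = set0 by apply/eqP; rewrite setD_eq0.
           have -> : (U :&: B != set0) = true.
           { apply/set0Pn. exists y0. by rewrite inE Hy0 (subsetP HUB _ Hy0). }
           rewrite cntF0 /= Rplus_0_r /th -exp_plus. f_equal. ring. }
         rewrite (@iid_uniq n _ _ _ (Hh1 x ltac:(lra)) Hc) /ind.
         destruct (Rle_dec D x); last lra. destruct (Rle_dec (D + L) x); last lra.
         right. simpl. ring.
  + rewrite HVb. apply Rmult_le_compat_l; first lra.
    set V := Vb n. set qD := exp (- D / lam). have HV : 2 <= V := HV2.
    have HP1 := Pge_ge0 D. have HP2 := Pge_ge0 (D + L).
    have HiE : 0 < / (1 - E0) by apply Rinv_0_lt_compat; lra.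
    have Hqpos : 0 < qD by apply exp_pos.
    destruct (Rlt_dec qD (7 * E0)) as [Hq|Hq].
    * have HPD : Pge D <= 6 * E0 / (1 - E0).
      { rewrite /Pge -/qD. apply Rmax_lub.
        - apply Rmult_le_pos; lra.
        - apply Rmult_le_compat_r; lra. }
      have : (th - 1) * V * Pge D <= V * alpha.
      { rewrite /alpha. have : (th - 1) * Pge D <= 1/9 * (6 * E0 / (1 - E0)).
        { apply Rmult_le_compat; lra. }
        have -> : 2 / 3 * (E0 / (1 - E0)) = 1/9 * (6 * E0 / (1 - E0)) by field; lra.
        move=> H; have := Rmult_le_compat_l V _ _ ltac:(lra) H. lra. }
      have : th * (1 - V) * Pge (D + L) <= 0.
      { have : 0 <= th * (V - 1) * Pge (D + L).
        { apply Rmult_le_pos; last lra. apply Rmult_le_pos; lra. }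
        lra. }
      lra.
    * have Hw : exp (- (D + L) / lam) = qD * exp (- L / lam).
      { rewrite /qD -exp_plus. f_equal. field. lra. }
      have HeL : 1/3 <= exp (- L / lam).
      { have H3 : exp (L / lam) <= 3.
        { apply Rle_trans with (exp 1); last by apply exp_le_3.
          left. apply exp_increasing. apply (Rmult_lt_reg_r lam); first lra.
          field_simplify; lra. }
        have -> : - L / lam = - (L / lam) by field; lra.
        rewrite exp_Ropp. have := exp_pos (L / lam) => Hp.
        apply (Rmult_le_reg_r (exp (L / lam))); first lra.
        rewrite Rinv_l; lra. }
      set w := exp (- (D + L) / lam) in Hw.
      have Hw3 : qD / 3 <= w by rewrite Hw; nra.
      have -> : Pge D = (qD - E0) / (1 - E0).
      { rewrite /Pge -/qD. apply Rmax_right. apply Rmult_le_pos; lra. }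
      have -> : Pge (D + L) = (w - E0) / (1 - E0).
      { rewrite /Pge -/w. apply Rmax_right. apply Rmult_le_pos; lra. }
      have Key : (th - 1) * V * (qD - E0) + th * (1 - V) * (w - E0) <= 0.
      { set A := th * (w - E0) - (th - 1) * (qD - E0).
        have HA : 0 <= A.
        { rewrite /A. have : (th - 1) * (qD - E0) <= 1/9 * (qD - E0) by apply Rmult_le_compat_r; lra.
          have : w - E0 <= th * (w - E0) by nra. lra. }
        have H2A : 0 <= 2 * A - th * (w - E0).
        { rewrite /A. have : (th - 1) * (qD - E0) <= 1/9 * (qD - E0) by apply Rmult_le_compat_r; lra.
          have : w - E0 <= th * (w - E0) by nra. lra. }
        have : 2 * A <= V * A by nra.
        have -> : (th - 1) * V * (qD - E0) + th * (1 - V) * (w - E0) = - (V * A - th * (w - E0)) by rewrite /A; ring.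
        lra. }
      have : V + (th - 1) * V * ((qD - E0) / (1 - E0)) + th * (1 - V) * ((w - E0) / (1 - E0))
             = V + ((th - 1) * V * (qD - E0) + th * (1 - V) * (w - E0)) * / (1 - E0) by rewrite /Rdiv; ring.
      move=> ->. have : ((th - 1) * V * (qD - E0) + th * (1 - V) * (w - E0)) * / (1 - E0) <= 0.
      { apply Rmult_le_0_r; lra. }
      nra.
Qed.

End An.


Section Comb.
Variable X : finType.
Variable d : X -> X -> R.

Definition Bn (tf : nat -> X) (rs : seq R) (i : nat) : {set X} := Defs.ball d (tf i) (nth 0 rs i).

Lemma cntF_sum n : forall U tf rs,
  cntF X d U tf n rs = (\sum_(0 <= j < n) (Bn tf rs j :&: (U :\: \bigcup_(0 <= m < j) Bn tf rs m) != set0))%N.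
Proof.
elim: n => [|n IH] U tf rs; first by rewrite big_geq.
rewrite /= IH big_nat_recl //= [\bigcup_(0 <= m < 0) _]big_geq // setD0 setIC. congr addn.
apply: eq_bigr => j _. rewrite big_nat_recl // setDDl.
have E : forall i, Bn (fun i0 => tf i0.+1) (behead rs) i = Bn tf rs i.+1.
{ move=> i. by rewrite /Bn nth_behead. }
rewrite E. congr (_ != _). congr (_ :&: _). congr (_ :\: _). congr (_ :|: _).
apply: eq_bigr => i _. by rewrite E.
Qed.


Section ZP.
Variable k : nat.
Variable term : 'I_k.+1 -> X.
Variable rs : seq R.
Variable P : seq X.
Let tf := fun i => term (inord i).
Let B (j : 'I_k.+1) := Defs.ball d (term j) (nth 0 rs j).

Lemma Bn_ord (j : 'I_k.+1) : Bn tf rs j = B j.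
Proof. by rewrite /Bn /tf inord_val. Qed.

Lemma bigcup_ord (j : 'I_k.+1) :
  \bigcup_(m : 'I_k.+1 | (nat_of_ord m < nat_of_ord j)%N) B m = \bigcup_(0 <= m < j) Bn tf rs m.
Proof.
rewrite big_mkord (big_ord_widen k.+1 (fun m => Bn tf rs m)); last by apply ltnW.
apply: eq_bigr => m _. by rewrite Bn_ord.
Qed.

Lemma cluster_eq (j : 'I_k.+1) :
  cluster d term rs j = B j :\: \bigcup_(m : 'I_k.+1 | (nat_of_ord m < nat_of_ord j)%N) B m.
Proof. by []. Qed.

Lemma ZP_sum : Z_P d term rs P =
  (\sum_(0 <= j < k.+1) (Bn tf rs j :&: ([set x in P] :\: \bigcup_(0 <= m < j) Bn tf rs m) != set0))%N.
Proof.
set Ps := [set x in P].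
set C := cluster d term rs.
set J := [set j : 'I_k.+1 | C j :&: Ps != set0].
have HJ : [set S in carved_partition d term rs | S :&: Ps != set0] = [set C j | j in J].
{ apply/setP => S. rewrite inE /carved_partition. apply/andP/imsetP.
  - move=> [HS HSP]. move: HS. rewrite in_setD1 => /andP [_ /imsetP [j _ HSj]]. subst S.
    exists j => //. by rewrite /J inE.
  - move=> [j Hj ->]. move: Hj. rewrite /J inE => Hj. split => //.
    rewrite in_setD1. apply/andP; split; last by apply/imsetP; exists j.
    apply/eqP => H0. move: Hj. by rewrite H0 set0I eqxx. }
rewrite /Z_P -/Ps HJ card_in_imset.
- rewrite -sum1dep_card big_mkcond /= big_mkord. apply: eq_bigr => j _.
  have -> : C j :&: Ps = Bn tf rs j :&: (Ps :\: \bigcup_(0 <= m < j) Bn tf rs m).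
  { rewrite /C cluster_eq bigcup_ord Bn_ord. apply/setP => x.
    rewrite !in_setI !in_setD. by case: (x \in B j); case: (x \in Ps); case: (x \in \bigcup_(0 <= m < j) Bn tf rs m). }
  by case: (_ != set0).
- move=> i j. rewrite !inE => Hi Hj Hij. apply/eqP/negPn/negP => Hne.
  have Hwlog : forall i j : 'I_k.+1, C i :&: Ps != set0 -> C i = C j -> (nat_of_ord i < nat_of_ord j)%N -> False.
  { move=> i' j' Hi' Hij' Hlt. move/set0Pn: Hi' => [x]. rewrite in_setI => /andP [Hx _].
    move: (Hx). rewrite Hij' /C cluster_eq in_setD => /andP [Hnx _].
    move: Hx. rewrite /C cluster_eq in_setD => /andP [_ HxB].
    move/negP: Hnx; apply. apply: (subsetP (@bigcup_sup _ _ i' (fun m : 'I_k.+1 => (nat_of_ord m < nat_of_ord j')%N) B Hlt)). exact HxB. }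
  case: (ltngtP i j) => H.
  + by apply: (Hwlog i j).
  + by apply: (Hwlog j i).
  + move: Hne. by rewrite (val_inj H) eqxx.
Qed.

End ZP.

End Comb.


Section Fin.
Variable X : finType.
Variable d : X -> X -> R.
Hypothesis Hm : is_metric d.

Lemma pl_ge0 x0 xs : 0 <= path_length d x0 xs.
Proof.
elim: xs x0 => [|x1 xs IH] x0 /=; first lra.
have := IH x1. have := proj1 Hm x0 x1. lra.
Qed.

Lemma pl_diam xs : forall x0 y z, y \in x0 :: xs -> z \in x0 :: xs -> d y z <= path_length d x0 xs.
Proof.
have Hdd : forall x, d x x = 0 by move=> x; apply (proj1 (proj2 Hm)).
have Hsym := proj1 (proj2 (proj2 Hm)). have Htri := proj2 (proj2 (proj2 Hm)).
elim: xs => [|x1 xs IH] x0 y z.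
- rewrite !mem_seq1 => /eqP -> /eqP ->. rewrite Hdd /=; lra.
- rewrite (in_cons x0) (in_cons x0) => /orP [/eqP ->|Hy] /orP [/eqP ->|Hz] /=.
  + rewrite Hdd. have := pl_ge0 x1 xs. have := proj1 Hm x0 x1. lra.
  + have := IH x1 x1 z (mem_head _ _) Hz. have := Htri x0 x1 z. lra.
  + have := IH x1 x1 y (mem_head _ _) Hy. have := Htri x0 x1 y. rewrite (Hsym y x0). lra.
  + have := IH x1 y z Hy Hz. have := proj1 Hm x0 x1. lra.
Qed.

Lemma inP (T : eqType) (x : T) (s : seq T) : x \in s -> List.In x s.
Proof.
elim: s => [|a s IH] //. rewrite in_cons => /orP [/eqP ->|H]; [by left | right; by apply IH].
Qed.

Definition Tl : list R := List.flat_map (fun a => List.map (fun b => d a b) (enum X)) (enum X).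

Lemma in_Tl a b : List.In (d a b) Tl.
Proof.
apply List.in_flat_map. exists a; split; first by apply inP; rewrite mem_enum.
apply List.in_map. apply inP; by rewrite mem_enum.
Qed.

Definition Zb k (P : seq X) (Bf : 'I_k -> {set X}) : nat :=
  #|[set S in ([set Bf j :\: \bigcup_(m : 'I_k | (nat_of_ord m < nat_of_ord j)%N) Bf m | j : 'I_k] :\ set0)
     | S :&: [set x in P] != set0]|.

Lemma ZP_Zb k (term : 'I_k -> X) rs P :
  Z_P d term rs P = Zb _ P (fun j => Defs.ball d (term j) (nth 0 rs j)).
Proof. by []. Qed.

Lemma nice_ZP k (term : 'I_k -> X) P (g : nat -> R) : nice Tl (fun rs => g (Z_P d term rs P)).
Proof.
move=> rs rs' H. rewrite !ZP_Zb. do 2 f_equal.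
apply functional_extensionality => j. apply/setP => y. rewrite /Defs.ball !inE.
have := H j (d (term j) y) (in_Tl _ _).
destruct (Rle_dec (d (term j) y) (nth 0 rs j)); destruct (Rle_dec (d (term j) y) (nth 0 rs' j)) => // Hiff; exfalso; tauto.
Qed.

End Fin.


Lemma exp_pow x n : exp x ^ n = exp (INR n * x).
Proof.
elim: n => [|n IH]; first by rewrite /= Rmult_0_l exp_0.
rewrite S_INR. change (exp x ^ n.+1) with (exp x * exp x ^ n).
rewrite IH -exp_plus. f_equal. ring.
Qed.

Lemma exp_le x y : x <= y -> exp x <= exp y.
Proof.
move=> H. destruct (Req_dec x y) as [->|Hne]; first lra. left; apply exp_increasing; lra.
Qed.

Theorem mainTheorem4 :
  exists c : R, 0 < c /\
  forall (X : finType) (d : X -> X -> R) (k : nat) (term : 'I_k -> X)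
         (Delta : R) (x0 : X) (xs : seq X) (t : R),
    is_metric d -> (2 <= k)%N -> injective term -> 0 < Delta ->
    is_shortest_path d x0 xs ->
    d x0 (last x0 xs) < Delta / ln (INR k) ->
    1 <= t ->
    exists p : R,
      prob_event (Delta / ln (INR k)) Delta k (Z_P_gt d term (x0 :: xs) t) p /\
      p <= 2 * exp (- c * t).
Proof.
exists (1/50). split; first lra.
move=> X d k term Delta x0 xs t Hm Hk Hinj HD Hsp HL Ht.
case: k term Hinj Hk HL => [|k'] term Hinj Hk HL; first by [].
have HK : 2 <= INR k'.+1.
{ change 2 with (INR 2). apply le_INR. by apply/leP. }
have Hlnk : 0 < ln (INR k'.+1).
{ rewrite -ln_1. apply ln_increasing; lra. }
set lam := Delta / ln (INR k'.+1).
have Hlam : 0 < lam by apply Rdiv_lt_0_compat.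
have HE : E0 lam Delta = / INR k'.+1.
{ rewrite /E0. have -> : - Delta / lam = - ln (INR k'.+1) by rewrite /lam; field; lra.
  rewrite exp_Ropp exp_ln //; lra. }
set Pset := [set x in x0 :: xs].
set L := d x0 (last x0 xs).
have HL0 : 0 <= L by apply Hm.
have Hdiam : forall y z, y \in Pset -> z \in Pset -> d y z <= L.
{ move=> y z; rewrite !inE => Hy Hz. rewrite /L -Hsp. by apply: pl_diam. }
set g := fun n : nat => if (if Rlt_dec t (INR n) then true else false) then 1 else 0.
have [p Hp] := iid_exists lam Delta Hlam HD (Tl _ d) k'.+1 _ (nice_ZP _ d _ term (x0 :: xs) g).
set g' := fun n : nat => exp (1/10 * (- t + INR n)).
have [w Hw] := iid_exists lam Delta Hlam HD (Tl _ d) k'.+1 _ (nice_ZP _ d _ term (x0 :: xs) g').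
exists p. split; first exact Hp.
have Hpw : p <= w.
{ apply: (iid_mono lam Delta Hlam HD k'.+1 _ _ p w Hp Hw) => rs. rewrite /g /g'.
  destruct (Rlt_dec t (INR (Z_P d term rs (x0 :: xs)))) as [H|H] => /=.
  - have := exp_ineq1_le (1/10 * (- t + INR (Z_P d term rs (x0 :: xs)))). nra.
  - left; apply exp_pos. }
have Hp1 : p <= 1.
{ apply: (iid_mono lam Delta Hlam HD k'.+1 _ _ p 1 Hp (iid_const lam Delta Hlam HD k'.+1 1)) => rs.
  rewrite /g. destruct (Rlt_dec _ _) => /=; lra. }
have Hwb : w <= exp (1/10 * (- t)) * Vb lam Delta k'.+1.
{ have HL' : L < lam by exact HL. apply: (bound_main lam Delta Hlam HD X d Hm Pset L HL' Hdiam HL0 k'.+1 (fun i => term (inord i)) Pset (- t) _ w (subxx _) _ Hw).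
  move=> rs. rewrite /g' ZP_sum cntF_sum. by []. }
have HVb : Vb lam Delta k'.+1 <= 2 * exp (4/3).
{ rewrite /Vb /alpha HE. set K := INR k'.+1. have HK' : 2 <= K := HK.
  have Ha : 0 <= 2 / 3 * (/ K / (1 - / K)).
  { have -> : 2 / 3 * (/ K / (1 - / K)) = 2 / (3 * (K - 1)) . { field. split; lra. }
    apply Rlt_le, Rdiv_lt_0_compat; lra. }
  apply Rmult_le_compat_l; first lra.
  apply Rle_trans with (exp (2 / 3 * (/ K / (1 - / K))) ^ k'.+1).
  { apply pow_incr. have := exp_ineq1_le (2 / 3 * (/ K / (1 - / K))). lra. }
  rewrite exp_pow -/K. apply exp_le.
  have -> : K * (2 / 3 * (/ K / (1 - / K))) = 2 * K / (3 * (K - 1)) by field; split; lra.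
  apply (Rmult_le_reg_r (3 * (K - 1))); first lra.
  have -> : 2 * K / (3 * (K - 1)) * (3 * (K - 1)) = 2 * K by field; repeat split; lra. lra. }
have Hexp13 : exp (1/3) < 2.
{ have H1 : exp (1/3) ^ 3 = exp 1 by rewrite exp_pow; f_equal; simpl; field.
  have := exp_le_3. have := exp_pos (1/3). move=> Hp0 H3.
  destruct (Rlt_dec (exp (1/3)) 2) as [|Hn] => //. exfalso.
  have : 2 ^ 3 <= exp (1/3) ^ 3 by apply pow_incr; lra.
  rewrite H1 /=. lra. }
destruct (Rle_dec (50/3) t) as [Hbig|Hsmall].
- apply Rle_trans with (exp (1/10 * (- t)) * (2 * exp (4/3))).
  { apply Rle_trans with w => //. apply Rle_trans with (exp (1/10 * (- t)) * Vb lam Delta k'.+1) => //.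
    apply Rmult_le_compat_l; last lra. left; apply exp_pos. }
  have -> : exp (1/10 * (- t)) * (2 * exp (4/3)) = 2 * exp (1/10 * (- t) + 4/3) by rewrite exp_plus; ring.
  apply Rmult_le_compat_l; first lra.
  destruct (Req_dec (1/10 * (- t) + 4/3) (- (1/50) * t)) as [->|Hne]; first lra.
  left; apply exp_increasing. lra.
- apply Rle_trans with 1 => //.
  have : exp (- (1/3)) <= exp (- (1/50) * t).
  { destruct (Req_dec (- (1/3)) (- (1/50) * t)) as [->|Hne]; first lra.
    left; apply exp_increasing. lra. }
  rewrite exp_Ropp. have := exp_pos (1/3) => Hp0.
  have : / 2 < / exp (1/3) by apply Rinv_lt_contravar; nra.
  lra.
Qed.
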